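(* Let $X$ be an absolutely continuous non-negative random variable whose density $f$ is supported on $[0,\nu]$ with $\nu<\infty$, and let $\mu=\mathrm{E}(X)$, assumed to be positive. Then $$H^w\le \mu\log\frac{\nu^2}{2\mu}.$$ Moreover, equality holds if $X$ is uniformly distributed on $[0,\nu]$.
   Context: The weighted entropy of $X$ with density $f$ is $H^w=-\mathrm{E}[X\log f(X)]=-\int_0^{\infty}x\,f(x)\log f(x)\,dx$, with $\log$ the natural logarithm. *)

(* Defs.v *)
From HB Require Import structures.
From mathcomp Require Import all_boot all_order all_algebra.
From mathcomp Require Import all_classical all_reals all_analysis.
Set Implicit Arguments. Unset Strict Implicit. Unset Printing Implicit Defensive.
Import Order.TTheory GRing.Theory Num.Theory.
Import numFieldNormedType.Exports.
Local Open Scope classical_set_scope.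
Local Open Scope ring_scope.

Definition is_density (R : realType) (f : R -> R) : Prop :=
  measurable_fun setT f /\ (forall x, 0 <= f x) /\
  (\int[@lebesgue_measure R]_(x in setT) (f x)%:E = 1)%E.

Definition supported_on (R : realType) (f : R -> R) (nu : R) : Prop :=
  forall x, ~ (0 <= x <= nu) -> f x = 0.

Definition dmean (R : realType) (f : R -> R) : R :=
  Rintegral (@lebesgue_measure R) `[0%R, +oo[ (fun x => x * f x).

(* weighted entropy H^w = - int_0^oo x f(x) log f(x) dx  (extended real;
   the integrand is 0 where f x = 0, i.e. 0 log 0 = 0) *)
Definition weighted_entropy (R : realType) (f : R -> R) : \bar R :=
  (\int[@lebesgue_measure R]_(x in `[0%R, +oo[) (- (x * f x * ln (f x)))%:E)%E.

Definition unif_density (R : realType) (nu : R) : R -> R :=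
  fun x => if (0 <= x) && (x <= nu) then nu^-1 else 0.

(* Main.v *)
Require Import Defs.
From HB Require Import structures.
From mathcomp Require Import all_boot all_order all_algebra.
From mathcomp Require Import all_classical all_reals all_analysis.
From mathcomp Require Import measurable_realfun ring lra.
Import Order.TTheory GRing.Theory Num.Theory.
Import numFieldNormedType.Exports.
Local Open Scope classical_set_scope.
Local Open Scope ring_scope.

Section S.
Variable R : realType.
Let mu := @lebesgue_measure R.

Lemma Fder (c x : R) : is_derive x 1 (fun y : R => y ^+ 2 * (c / 2)) (x * c).
Proof.
apply: is_derive_eq.
rewrite scaler0 add0r /GRing.scale/= !mulr1.
have h2 : (2:R) != 0 by rewrite pnatr_eq0.
by field.
Qed.

Lemma int_lin (nu : R) (c : R) : 0 < nu ->
  (\int[mu]_(x in `[0%R, nu]) (x * c)%:E = (nu ^+ 2 / 2 * c)%:E)%E.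
Proof.
move=> hnu.
have cF : continuous (fun y : R => y ^+ 2 * (c / 2)).
  move=> x; apply: differentiable_continuous; apply/derivable1_diffP.
  apply: ex_derive; exact: Fder.
rewrite (@continuous_FTC2 _ _ (fun y : R => y ^+ 2 * (c / 2))) //.
- by rewrite -EFinD expr0n /= mul0r subr0 -mulrA (mulrC c).
- apply: continuous_in_subspaceT => x _.
  by apply: continuousM => //; exact: cvg_cst.
- split.
  + by move=> x _; apply: ex_derive; exact: Fder.
  + by apply: cvg_at_right_filter; exact: cF.
  + by apply: cvg_at_left_filter; exact: cF.
- by move=> x _; rewrite derive1E; apply: derive_val; exact: Fder.
Qed.

Lemma int_lin_D (nu c : R) : 0 < nu ->
  (\int[mu]_(x in `[0%R, +oo[)
     (if (0 <= x) && (x <= nu) then x * c else 0)%:E = (nu ^+ 2 / 2 * c)%:E)%E.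
Proof.
move=> hnu; transitivity (\int[mu]_(x in `[0%R, nu]) (x * c)%:E)%E; last exact: int_lin.
rewrite [LHS]integral_mkcond [RHS]integral_mkcond.
apply: eq_integral => x _.
rewrite /patch !mem_setE !in_itv.
have -> : (0 < x ?<= if true) = (0 <= x) by [].
have -> : (x < nu ?<= if ~~ false) = (x <= nu) by [].
rewrite andbT; by case: (0 <= x); case: (x <= nu).
Qed.
Lemma le_integral_meas (D : set R) (mD : measurable D) (f g : R -> \bar R) :
  measurable_fun D f -> measurable_fun D g ->
  (forall x, D x -> (f x <= g x)%E) ->
  (\int[mu]_(x in D) f x <= \int[mu]_(x in D) g x)%E.
Proof.
move=> mf mg fg; rewrite integralE [leRHS]integralE leeB//.
- apply: ge0_le_integral => //.
  + exact: measurable_funepos.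
  + exact: measurable_funepos.
  + by move=> x Dx; apply: (funepos_le (D:=D)) => //; [move=> y /set_mem; exact: fg|exact: mem_set].
- apply: ge0_le_integral => //.
  + exact: measurable_funeneg.
  + exact: measurable_funeneg.
  + by move=> x Dx; apply: (funeneg_le (D:=D)) => //; [move=> y /set_mem; exact: fg|exact: mem_set].
Qed.

Lemma ge0_integrable_fin (D : set R) (h : R -> R) :
  measurable_fun D h -> (forall x, D x -> 0 <= h x) ->
  (\int[mu]_(x in D) (h x)%:E < +oo)%E -> mu.-integrable D (EFin \o h).
Proof.
move=> mh h0 hfin; apply/integrableP; split; first exact/measurable_EFinP.
have -> : (\int[mu]_(x in D) `|(EFin \o h) x| = \int[mu]_(x in D) (h x)%:E)%E.
  apply: eq_integral => x /set_mem Dx.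
  by rewrite /= ger0_norm //; exact: h0.
by [].
Qed.

End S.

Lemma part1 (R : realType) (nu : R) (hnu : 0 < nu) (f : R -> R) :
  is_density f -> supported_on f nu -> 0 < dmean f ->
  (weighted_entropy f <= (dmean f * ln (nu ^+ 2 / (2 * dmean f)))%:E)%E.
Proof.
move=> [mf [f0 _]] supp hm.
have mD : measurable (`[0%R, +oo[ : set R) by exact: measurable_itv.
have Dx0 : forall x : R, x \in `[0%R, +oo[ -> 0 <= x.
  by move=> x; rewrite /= in_itv /= andbT.
have mxf : measurable_fun setT (fun x : R => x * f x).
  by apply: measurable_funM => //; exact: measurable_id.
have hxf : (\int[lebesgue_measure]_(x in `[0%R, +oo[) (x * f x)%:E = (dmean f)%:E)%E.
  have ge0 : (0 <= \int[lebesgue_measure]_(x in `[0%R, +oo[) (x * f x)%:E)%E.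
    by apply: integral_ge0 => x /Dx0 x0; rewrite lee_fin mulr_ge0.
  move: hm; rewrite /dmean /Rintegral.
  move: ge0; case: (\int[_]_(_ in _) _)%E => [r| |] //= _; by rewrite ltxx.
set m := dmean f in hm hxf *.
set a := nu ^+ 2 / (2 * m).
have ha : 0 < a by apply: divr_gt0; [exact: exprn_gt0 | exact: mulr_gt0].
pose g (x : R) : R := (if (0 <= x) && (x <= nu) then x * a^-1 else 0) + (ln a - 1) * (x * f x).
have mlhs : measurable_fun (`[0%R, +oo[ : set R) (fun x : R => (-(x * f x * ln (f x)))%:E).
  apply/measurable_EFinP; apply: (measurable_funS measurableT) => //.
  apply: measurable_funN; apply: measurable_funM => //.
  by apply: measurableT_comp => //; exact: measurable_ln.
have mif : measurable_fun setT (fun x : R => if (0 <= x) && (x <= nu) then x * a^-1 else 0).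
  apply: measurable_fun_ifT.
  - apply: measurable_and; apply: measurable_fun_ler => //; exact: measurable_id.
  - by apply: measurable_funM => //; exact: measurable_id.
  - exact: measurable_cst.
have mg : measurable_fun setT g.
  by apply: measurable_funD => //; apply: measurable_funM.
apply: le_trans (@le_integral_meas R _ mD _ (fun x => (g x)%:E) mlhs _ _) _.
- by apply/measurable_EFinP; apply: (measurable_funS measurableT) => //.
- move=> x Dx.
  have x0 : 0 <= x by exact: Dx0.
  rewrite lee_fin /g.
  have [fx0|fxp] : f x = 0 \/ 0 < f x.
    by case: (ltgtP (f x) 0) => h; [have := f0 x; rewrite leNgt h | right | left].
  + rewrite fx0 !(mulr0, mul0r) oppr0 addr0.
    by case: ifP => _ //; rewrite mulr_ge0 // invr_ge0 ltW.
  + have xnu : (0 <= x) && (x <= nu).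
      apply/negPn/negP => h; have e := supp x (negP h).
      by move: fxp; rewrite e ltxx.
    rewrite xnu.
    have afp : 0 < a * f x by rewrite mulr_gt0.
    have key : - ln (f x) <= (a * f x)^-1 - 1 + ln a.
      have t0 : 0 < (a * f x)^-1 by rewrite invr_gt0.
      have := @le_ln1Dx R ((a * f x)^-1 - 1).
      rewrite (_ : 1 + ((a * f x)^-1 - 1) = (a * f x)^-1); last by rewrite addrC subrK.
      rewrite lnV ?posrE // lnM ?posrE //.
      move=> h; have := h ltac:(lra); lra.
    have := ler_wpM2l (mulr_ge0 x0 (f0 x)) key.
    have e : x * f x * ((a * f x)^-1 - 1 + ln a) = x / a + (ln a - 1) * (x * f x).
      have an : a != 0 by rewrite gt_eqF.
      have fn : f x != 0 by rewrite gt_eqF.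
      field; by rewrite an fn.
    by rewrite e -mulrN.
have i1 : lebesgue_measure.-integrable (`[0%R, +oo[ : set R)
    (EFin \o (fun x : R => if (0 <= x) && (x <= nu) then x * a^-1 else 0)).
  apply: ge0_integrable_fin.
  - by apply: (measurable_funS measurableT).
  - move=> x Dx; have x0 : 0 <= x by exact: Dx0.
    by case: ifP => // _; rewrite mulr_ge0 // invr_ge0 ltW.
  - by rewrite int_lin_D // ltry.
have i2 : lebesgue_measure.-integrable (`[0%R, +oo[ : set R)
    (EFin \o (fun x : R => x * f x)).
  apply: ge0_integrable_fin.
  - by apply: (measurable_funS measurableT).
  - move=> x Dx; have x0 : 0 <= x by exact: Dx0.
    by rewrite mulr_ge0.
  - by rewrite hxf ltry.
have -> : (\int[lebesgue_measure]_(x in `[0%R, +oo[) (g x)%:E =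
   \int[lebesgue_measure]_(x in `[0%R, +oo[)
     ((if (0 <= x) && (x <= nu) then x * a^-1 else 0)%:E
      + (ln a - 1)%:E * (x * f x)%:E))%E.
  by apply: eq_integral => x _; rewrite /g EFinD EFinM.
rewrite integralD //; last exact: integrableZl.
rewrite integralZl // int_lin_D // hxf -EFinM -EFinD lee_fin.
have -> : nu ^+ 2 / 2 * a^-1 = m.
  rewrite /a.
  have nn : nu != 0 by rewrite gt_eqF.
  have mn : m != 0 by rewrite gt_eqF.
  field; by rewrite nn mn.
have -> : m + (ln a - 1) * m = m * ln a by ring.
by [].
Qed.

Lemma part2 (R : realType) (nu : R) (hnu : 0 < nu) :
  weighted_entropy (unif_density nu) =
    (dmean (unif_density nu) * ln (nu ^+ 2 / (2 * dmean (unif_density nu))))%:E.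
Proof.
have nn : nu != 0 by rewrite gt_eqF.
have hd : dmean (unif_density nu) = nu / 2.
  rewrite /dmean /Rintegral.
  have -> : (\int[lebesgue_measure]_(x in `[0%R, +oo[) (x * unif_density nu x)%:E =
      \int[lebesgue_measure]_(x in `[0%R, +oo[)
        (if (0 <= x) && (x <= nu) then x * nu^-1 else 0)%:E)%E.
    by apply: eq_integral => x _; rewrite /unif_density; case: ifP => _; rewrite ?mulr0.
  rewrite int_lin_D //=.
  field; by rewrite nn.
rewrite hd.
have -> : weighted_entropy (unif_density nu) =
    (\int[lebesgue_measure]_(x in `[0%R, +oo[)
        (if (0 <= x) && (x <= nu) then x * (- (nu^-1 * ln nu^-1)) else 0)%:E)%E.
  rewrite /weighted_entropy; apply: eq_integral => x _; rewrite /unif_density.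
  case: ifP => _; first by rewrite mulrN mulrA.
  by rewrite !(mulr0, mul0r) oppr0.
rewrite int_lin_D //; congr EFin.
rewrite lnV ?posrE //.
have -> : nu ^+ 2 / (2 * (nu / 2)) = nu by field; rewrite nn.
field; by rewrite nn.
Qed.

Theorem mainTheorem2 (R : realType) (nu : R) (hnu : 0 < nu) :
  (forall f : R -> R, is_density f -> supported_on f nu ->
     0 < dmean f ->
     (weighted_entropy f <= (dmean f * ln (nu ^+ 2 / (2 * dmean f)))%:E)%E)
  /\
  weighted_entropy (unif_density nu) =
    (dmean (unif_density nu) * ln (nu ^+ 2 / (2 * dmean (unif_density nu))))%:E.
Proof.
split; first by move=> f; exact: part1.
exact: part2.
Qed.
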